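(* Let $\mathbb{F}$ be a field, $\mathcal{S}\subseteq 2^{[n]}$ a Sperner family and $h:\mathcal{S}\to 2^{[n]}$ a function with $h(S)\subseteq S$ for every $S\in\mathcal{S}$. Then $\mathbb{G}=\mathbb{G}(\mathcal{S},h)$ is a Gröbner basis of the ideal $\langle\mathbb{G}\rangle\subseteq\mathbb{F}[x_1,\dots,x_n]$ with respect to some term order if and only if $|\mathcal{H}(\mathcal{S})|=|\mathcal{F}(\mathcal{S},h)|$.
   Context: $[n]=\{1,\dots,n\}$. A Sperner family is a family of sets none of which is contained in another. For $H\subseteq S\subseteq[n]$, $\mathcal{Q}_{S,H}=\{H\cup B: B\subseteq[n]\setminus S\}$; $\mathcal{H}(\mathcal{S})=\{F\subseteq[n]: \text{no } S\in\mathcal{S} \text{ satisfies } S\subseteq F\}$; $\mathcal{F}(\mathcal{S},h)=2^{[n]}\setminus\bigcup_{S\in\mathcal{S}}\mathcal{Q}_{S,h(S)}$. For $H\subseteq[n]$ put $\mathbf{x}_H=\prod_{i\in H}x_i$, and for $H\subseteq S\subseteq[n]$ put $f_{S,H}(\mathbf{x})=\mathbf{x}_H\prod_{i\in S\setminus H}(x_i-1)$. Define $\mathbb{G}(\mathcal{S},h)=\{f_{S,h(S)}: S\in\mathcal{S}\}\cup\{x_i^2-x_i: i\in[n]\}$. A term order is a total order on monomials of $\mathbb{F}[x_1,\dots,x_n]$ with $1$ minimal and compatible with multiplication by monomials; $\mathrm{lm}(f)$ is the largest monomial of $f\neq0$ with nonzero coefficient. A finite $\mathbb{G}\subseteq I$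 is a Gröbner basis of an ideal $I$ with respect to a term order if for every nonzero $f\in I$ some $g\in\mathbb{G}$ has $\mathrm{lm}(g)$ dividing $\mathrm{lm}(f)$. *)

(* Defs.v *)
From mathcomp Require Import all_boot all_order all_algebra.
From mathcomp Require Import mpoly.
Set Implicit Arguments. Unset Strict Implicit. Unset Printing Implicit Defensive.
Import GRing.Theory.
Local Open Scope ring_scope.

Definition sperner (n : nat) (fam : {set {set 'I_n}}) : Prop :=
  forall A B, A \in fam -> B \in fam -> A \subset B -> A = B.

Definition Qset (n : nat) (S H : {set 'I_n}) : {set {set 'I_n}} :=
  [set H :|: B | B in powerset (~: S)].

Definition Hfam (n : nat) (fam : {set {set 'I_n}}) : {set {set 'I_n}} :=
  [set F : {set 'I_n} | [forall A in fam, ~~ (A \subset F)]].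

Definition Ffam (n : nat) (fam : {set {set 'I_n}})
    (h : {set 'I_n} -> {set 'I_n}) : {set {set 'I_n}} :=
  ~: (\bigcup_(A in fam) Qset A (h A)).

Definition xH (F : fieldType) (n : nat) (H : {set 'I_n}) : {mpoly F[n]} :=
  \prod_(i in H) 'X_i.

Definition fSH (F : fieldType) (n : nat) (S H : {set 'I_n}) : {mpoly F[n]} :=
  xH F H * \prod_(i in S :\: H) ('X_i - 1).

Definition Gbasis (F : fieldType) (n : nat) (fam : {set {set 'I_n}})
    (h : {set 'I_n} -> {set 'I_n}) : seq {mpoly F[n]} :=
  map (fun A => fSH F A (h A)) (enum fam) ++
  map (fun i : 'I_n => 'X_i ^+ 2 - 'X_i) (enum 'I_n).

Definition in_ideal (F : fieldType) (n : nat) (G : seq {mpoly F[n]})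
    (f : {mpoly F[n]}) : Prop :=
  exists c : seq {mpoly F[n]}, f = \sum_(i < size G) c`_i * G`_i.

Definition term_order (n : nat) (le : rel 'X_{1..n}) : Prop :=
  [/\ reflexive le, antisymmetric le, transitive le & total le] /\
  (forall m, le 0%MM m) /\
  (forall m1 m2 p, le m1 m2 -> le (m1 + p)%MM (m2 + p)%MM).

Definition is_lm (F : fieldType) (n : nat) (le : rel 'X_{1..n})
    (f : {mpoly F[n]}) (m : 'X_{1..n}) : Prop :=
  m \in msupp f /\ forall m', m' \in msupp f -> le m' m.

Definition groebner (F : fieldType) (n : nat) (le : rel 'X_{1..n})
    (G : seq {mpoly F[n]}) (I : {mpoly F[n]} -> Prop) : Prop :=
  (forall g, g \in G -> I g) /\
  forall f, I f -> f != 0 ->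
    exists2 g, g \in G &
      exists mg mf, [/\ is_lm le g mg, is_lm le f mf & (mg <= mf)%MM].

(* Main.v *)
Require Import Defs.
From mathcomp Require Import all_boot all_order all_algebra.
From mathcomp Require Import mpoly.
From mathcomp Require Import zify.
Set Implicit Arguments. Unset Strict Implicit. Unset Printing Implicit Defensive.
Import Order.TTheory GRing.Theory.
Local Open Scope ring_scope.

Definition mon (n : nat) (T : {set 'I_n}) : 'X_{1..n} :=
  [multinom (i \in T : nat) | i < n].

Lemma monE n (T : {set 'I_n}) i : mon T i = (i \in T).
Proof. by rewrite mnmE. Qed.

Lemma mon_inj n : injective (@mon n).
Proof.
move=> A B e; apply/setP => i; move/mnmP: e => /(_ i); rewrite !monE.
by case: (i \in A); case: (i \in B).
Qed.

Lemma mon_le n (A T : {set 'I_n}) : (mon A <= mon T)%MM = (A \subset T).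
Proof.
apply/mnm_lepP/subsetP => [H i iA|H i]; first by move: (H i); rewrite !monE iA; case: (i \in T).
rewrite !monE; case iA: (i \in A) => //; by rewrite (H _ iA).
Qed.

Lemma xH_mon (F : fieldType) n (T : {set 'I_n}) : xH F T = 'X_[mon T].
Proof.
have -> : mon T = (\sum_(i in T) U_(i))%MM.
  apply/mnmP => i; rewrite monE mnm_sumE.
  rewrite (eq_bigr (fun j => (j == i : nat))); last by move=> j _; rewrite mnm1E.
  case iT: (i \in T).
    by rewrite (bigD1 i) //= eqxx big1 // => j /andP [_ /negbTE ->].
  by rewrite big1 // => j jT; case: eqP => // eji; rewrite -eji jT in iT.
by rewrite /xH; apply/esym/big_morph => [m1 m2|]; rewrite ?mpolyXD ?mpolyX0.
Qed.

Definition ev (F : fieldType) n (x : {set 'I_n}) : 'I_n -> F := fun i => (i \in x)%:R.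

Definition supp n (u : 'X_{1..n}) : {set 'I_n} := [set i | (0 < u i)%N].

Lemma prod_ev (F : fieldType) n (x : {set 'I_n}) (u : 'X_{1..n}) :
  \prod_(i < n) (ev F x i) ^+ (u i) = (supp u \subset x)%:R.
Proof.
case: (boolP (supp u \subset x)) => [/subsetP sx|/subsetPn [i iu ix]].
  apply: big1 => i _; rewrite /ev; case: (posnP (u i)) => [->|ui]; first by rewrite expr0.
  by rewrite sx ?inE // expr1n.
rewrite (bigD1 i) //= /ev (negbTE ix) expr0n; move: iu; rewrite inE => /lt0n_neq0 /negbTE ->.
by rewrite mul0r.
Qed.

Lemma ev_X (F : fieldType) n (x : {set 'I_n}) (u : 'X_{1..n}) :
  ('X_[u] : {mpoly F[n]}).@[ev F x] = (supp u \subset x)%:R.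
Proof. by rewrite mevalX prod_ev. Qed.

Lemma supp_mon n (T : {set 'I_n}) : supp (mon T) = T.
Proof. by apply/setP => i; rewrite inE monE; case: (i \in T). Qed.

Definition ML (F : fieldType) n (a : {set 'I_n} -> F) : {mpoly F[n]} :=
  \sum_J a J *: 'X_[mon J].

Lemma mcoeff_ML (F : fieldType) n (a : {set 'I_n} -> F) T :
  (ML a)@_(mon T) = a T.
Proof.
rewrite /ML raddf_sum (bigD1 T) //= mcoeffZ mcoeffX eqxx mulr1 big1 ?addr0 //.
move=> J JT; rewrite mcoeffZ mcoeffX; case: eqP => [/mon_inj e|_]; last by rewrite mulr0.
by rewrite e eqxx in JT.
Qed.

Lemma msupp_ML (F : fieldType) n (a : {set 'I_n} -> F) u :
  u \in msupp (ML a) -> exists2 J, u = mon J & a J != 0.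
Proof.
rewrite mcoeff_msupp => H.
case: (boolP [exists J, (u == mon J) && (a J != 0)]) => [/existsP [J /andP [/eqP e aJ]]|/existsPn H']; first by exists J.
move: H; rewrite /ML raddf_sum big1 ?eqxx // => J _ /=; rewrite mcoeffZ mcoeffX.
case: eqP => [e|_]; last by rewrite mulr0.
move: (H' J); rewrite e eqxx /= negbK => /eqP ->; by rewrite mul0r.
Qed.

Lemma ev_ML (F : fieldType) n (a : {set 'I_n} -> F) x :
  (ML a).@[ev F x] = \sum_J a J * (J \subset x)%:R.
Proof.
rewrite /ML raddf_sum; apply: eq_bigr => J _.
by rewrite /= mevalZ ev_X supp_mon.
Qed.

Definition phi (F : fieldType) n (A H : {set 'I_n}) (i : 'I_n) : {mpoly F[n]} :=
  if i \in H then 'X_i else if i \in A then 'X_i - 1 else 1.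

Lemma fSH_prod (F : fieldType) n (A H : {set 'I_n}) :
  H \subset A -> fSH F A H = \prod_i phi F A H i.
Proof.
move=> /subsetP HA; rewrite /fSH /xH !(big_mkcond (fun i => i \in _)) -big_split /=.
apply: eq_bigr => i _; rewrite /phi inE.
case iH: (i \in H) => /=; [exact: mulr1 | exact: mul1r].
Qed.

Definition gco (F : fieldType) n (A H : {set 'I_n}) (i : 'I_n) : F :=
  if i \in H then 0 else if i \in A then -1 else 1.

Definition aS (F : fieldType) n (A H : {set 'I_n}) (J : {set 'I_n}) : F :=
  (J \subset A)%:R * \prod_i (if i \in J then 1 else gco F A H i).

Lemma aS_self (F : fieldType) n (A H : {set 'I_n}) :
  H \subset A -> aS F A H A = 1.
Proof.
move=> /subsetP HA; rewrite /aS subxx mul1r big1 // => i _.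
case iA: (i \in A) => //; rewrite /gco iA.
by case iH: (i \in H) => //; rewrite (HA _ iH) in iA.
Qed.

Lemma aS_sub (F : fieldType) n (A H : {set 'I_n}) J :
  aS F A H J != 0 -> J \subset A.
Proof. by rewrite /aS; case: (J \subset A) => //; rewrite mul0r eqxx. Qed.

Lemma fSH_ML (F : fieldType) n (A H : {set 'I_n}) :
  H \subset A -> fSH F A H = ML (aS F A H).
Proof.
move=> HA; rewrite fSH_prod //.
have HA' := subsetP HA.
rewrite (eq_bigr (fun i => (if i \in A then 'X_i else 0) + (gco F A H i)%:MP)); last first.
  move=> i _; rewrite /phi /gco; case iH: (i \in H); first by rewrite (HA' _ iH) addr0.
  case: (i \in A); first by rewrite raddfN /= rmorph1.
  by rewrite add0r rmorph1.
rewrite bigA_distr /ML; apply: eq_bigr => J _.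
rewrite /aS; case: (boolP (J \subset A)) => [/subsetP JA|/subsetPn [i iJ iA]]; last first.
  by rewrite (bigD1 i) //= iJ (negbTE iA) mul0r mul0r scale0r.
rewrite mul1r -mul_mpolyC rmorph_prod -xH_mon /xH (big_mkcond (fun i => i \in J)) -big_split /=.
apply: eq_bigr => i _; case iJ: (i \in J); first by rewrite (JA _ iJ) rmorph1 mul1r.
by rewrite mulr1.
Qed.

Lemma ideal0 (F : fieldType) n (G : seq {mpoly F[n]}) : in_ideal G 0.
Proof. by exists [::]; rewrite big1 // => i _; rewrite nth_nil mul0r. Qed.

Lemma idealD (F : fieldType) n (G : seq {mpoly F[n]}) f g :
  in_ideal G f -> in_ideal G g -> in_ideal G (f + g).
Proof.
move=> [c1 ->] [c2 ->]; exists (mkseq (fun i => c1`_i + c2`_i) (size G)).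
rewrite -big_split; apply: eq_bigr => i _ /=.
by rewrite nth_mkseq // mulrDl.
Qed.

Lemma idealM (F : fieldType) n (G : seq {mpoly F[n]}) q f :
  in_ideal G f -> in_ideal G (q * f).
Proof.
move=> [c1 ->]; exists (mkseq (fun i => q * c1`_i) (size G)).
rewrite big_distrr; apply: eq_bigr => i _ /=.
by rewrite nth_mkseq // mulrA.
Qed.

Lemma idealG (F : fieldType) n (G : seq {mpoly F[n]}) g :
  g \in G -> in_ideal G g.
Proof.
move=> gG; exists (mkseq (fun i => (i == index g G)%:R) (size G)).
rewrite (bigD1 (Ordinal (etrans (index_mem g G) gG))) //= big1 ?addr0.
  by rewrite nth_mkseq ?index_mem // eqxx mul1r nth_index.
move=> i /eqP ne; rewrite nth_mkseq //; case: eqP => [e|]; last by rewrite mul0r.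
by case: ne; apply: val_inj.
Qed.

Lemma ideal_sum (F : fieldType) n (G : seq {mpoly F[n]}) (I : finType) (P : pred I) (f : I -> {mpoly F[n]}) :
  (forall i, P i -> in_ideal G (f i)) -> in_ideal G (\sum_(i | P i) f i).
Proof.
move=> H; apply: (big_ind (in_ideal G)) => //; [exact: ideal0 | exact: idealD].
Qed.

Lemma ideal_vanish (F : fieldType) n (G : seq {mpoly F[n]}) v f :
  in_ideal G f -> (forall g, g \in G -> g.@[v] = 0) -> f.@[v] = 0.
Proof.
move=> [c ->] H; rewrite raddf_sum big1 // => i _ /=.
by rewrite mevalM (H _ (mem_nth 0 (ltn_ord i))) mulr0.
Qed.

Lemma QsetP n (A H x : {set 'I_n}) :
  H \subset A -> (x \in Qset A H) = (x :&: A == H).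
Proof.
move=> /subsetP HA; apply/imsetP/eqP => [[B] |e].
  rewrite inE => /subsetP BA ->; apply/setP => i; rewrite !inE.
  case iH: (i \in H); first by rewrite (HA _ iH).
  case iA: (i \in A); rewrite ?andbF //= andbT; apply/negbTE; apply/negP => iB.
  by move: (BA _ iB); rewrite inE iA.
exists (x :\: A); first by rewrite inE; apply/subsetP => i; rewrite !inE => /andP [].
by rewrite -e setID.
Qed.

Lemma FfamP n (fam : {set {set 'I_n}}) (h : {set 'I_n} -> {set 'I_n}) (x : {set 'I_n}) :
  reflect (forall A, A \in fam -> x \notin Qset A (h A)) (x \in Ffam fam h).
Proof.
rewrite /Ffam inE; apply: (iffP idP).
  by move=> H A Afam; apply: contra H => xQ; apply/bigcupP; exists A.
by move=> H; apply/negP => /bigcupP [A Afam]; apply/negP; apply: H.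
Qed.

Lemma fSH_in_G (F : fieldType) n (fam : {set {set 'I_n}}) (h : {set 'I_n} -> {set 'I_n}) A :
  A \in fam -> fSH F A (h A) \in Gbasis F fam h.
Proof. by move=> Af; rewrite mem_cat; apply/orP; left; apply/mapP; exists A; rewrite ?mem_enum. Qed.

Lemma sq_in_G (F : fieldType) n (fam : {set {set 'I_n}}) (h : {set 'I_n} -> {set 'I_n}) (i : 'I_n) :
  'X_i ^+ 2 - 'X_i \in Gbasis F fam h.
Proof. by rewrite mem_cat; apply/orP; right; apply/mapP; exists i; rewrite ?mem_enum. Qed.

Lemma Gbasis_vanish (F : fieldType) n (fam : {set {set 'I_n}}) (h : {set 'I_n} -> {set 'I_n}) (x : {set 'I_n}) :
  (forall A, A \in fam -> h A \subset A) ->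
  x \in Ffam fam h -> forall g, g \in Gbasis F fam h -> g.@[ev F x] = 0.
Proof.
move=> hsub /FfamP xF g; rewrite mem_cat => /orP [] /mapP [A]; last first.
  move=> _ ->; rewrite /= mevalB rmorphXn /= mevalXU /ev.
  by case: (A \in x); rewrite ?expr1n ?subrr // expr0n subrr.
rewrite mem_enum => Af ->.
have HA := hsub _ Af; have nQ := xF _ Af; rewrite QsetP // in nQ.
rewrite fSH_prod // rmorph_prod /=.
case: (boolP [exists i, ((i \in h A) && (i \notin x)) || [&& i \in A, i \notin h A & i \in x]]) => [/existsP [i Hi]|].
  rewrite (bigD1 i) //= /phi; move: Hi => /orP [/andP [iH ix]|/and3P [iA iH ix]].
    by rewrite iH mevalXU /ev (negbTE ix) mul0r.
  by rewrite (negbTE iH) iA mevalB mevalXU /ev ix meval1 -[true%:R]/(1 : F) subrr mul0r.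
move/existsPn => H; case/negP: nQ; apply/eqP/setP => i; rewrite !inE.
move: (H i); move/subsetP: HA => /(_ i).
by case: (i \in x); case: (i \in A); case: (i \in h A) => //= ->.
Qed.

Definition delta (F : fieldType) n (x : {set 'I_n}) : {mpoly F[n]} :=
  \prod_i (if i \in x then 'X_i else 1 - 'X_i).

Lemma delta_in_ideal (F : fieldType) n (fam : {set {set 'I_n}}) (h : {set 'I_n} -> {set 'I_n}) (x : {set 'I_n}) :
  (forall A, A \in fam -> h A \subset A) ->
  x \notin Ffam fam h -> in_ideal (Gbasis F fam h) (delta F x).
Proof.
move=> hsub /FfamP xF.
have [A Af xQ] : exists2 A, A \in fam & x \in Qset A (h A).
  case: (boolP [exists A in fam, x \in Qset A (h A)]) => [/existsP [A /andP [Af xQ]]|/exists_inPn H].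
    by exists A.
  by case: xF => A Af; apply: H.
have HA := hsub _ Af; rewrite QsetP // in xQ; move/eqP: xQ => xA.
pose q := \prod_i (if i \in A then (if i \in h A then 1 else -1) else
                 (if i \in x then 'X_i else 1 - 'X_i) : {mpoly F[n]}).
have -> : delta F x = q * fSH F A (h A).
  rewrite fSH_prod // /q -big_split; apply: eq_bigr => i _ /=; rewrite /phi.
  have := congr1 (fun S : {set 'I_n} => i \in S) xA; rewrite /= inE.
  move/subsetP: HA => /(_ i).
  case: (i \in x); case: (i \in A); case: (i \in h A) => //= _ _.
  all: rewrite ?mul1r ?mulr1 ?mulN1r ?opprB //.
by apply: idealM; apply: idealG; apply: fSH_in_G.
Qed.

Lemma xH_delta (F : fieldType) n (T : {set 'I_n}) :
  xH F T = \sum_(x : {set 'I_n}) (T \subset x)%:R *: delta F x.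
Proof.
rewrite /xH (big_mkcond (fun i => i \in T)).
rewrite (eq_bigr (fun i => 'X_i + (if i \in T then 0 else 1 - 'X_i))); last first.
  by move=> i _; case: (i \in T); rewrite ?addr0 // addrC subrK.
rewrite bigA_distr; apply: eq_bigr => x _ /=.
case: (boolP (T \subset x)) => [/subsetP Tx|/subsetPn [i iT ix]]; last first.
  by rewrite (bigD1 i) //= (negbTE ix) iT mul0r scale0r.
rewrite scale1r; apply: eq_bigr => i _; case ix: (i \in x) => //.
by case iT: (i \in T) => //; rewrite (Tx _ iT) in ix.
Qed.

Lemma vanish_in_ideal (F : fieldType) n (fam : {set {set 'I_n}}) (h : {set 'I_n} -> {set 'I_n}) (c : {set 'I_n} -> F) :
  (forall A, A \in fam -> h A \subset A) ->
  (forall x, x \in Ffam fam h -> \sum_T c T * (T \subset x)%:R = 0) ->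
  in_ideal (Gbasis F fam h) (\sum_T c T *: xH F T).
Proof.
move=> hsub H.
have -> : \sum_T c T *: xH F T = \sum_(x : {set 'I_n}) (\sum_T c T * (T \subset x)%:R) *: delta F x.
  under eq_bigr do rewrite xH_delta scaler_sumr.
  rewrite exchange_big; apply: eq_bigr => x _; rewrite scaler_suml.
  by apply: eq_bigr => T _; rewrite scalerA.
apply: ideal_sum => x _.
case: (boolP (x \in Ffam fam h)) => xF; first by rewrite H // scale0r; apply: ideal0.
by rewrite -mul_mpolyC; apply: idealM; apply: delta_in_ideal.
Qed.

Lemma to_le n (le : rel 'X_{1..n}) (m1 m2 : 'X_{1..n}) :
  term_order le -> (m1 <= m2)%MM -> le m1 m2.
Proof.
move=> [_ [h0 hadd]] H; have := hadd 0%MM (m2 - m1)%MM m1 (h0 _).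
by rewrite add0m submK.
Qed.

Lemma is_lm_unique (F : fieldType) n (le : rel 'X_{1..n}) (f : {mpoly F[n]}) m1 m2 :
  term_order le -> is_lm le f m1 -> is_lm le f m2 -> m1 = m2.
Proof.
move=> [[_ anti _ _] _] [s1 h1] [s2 h2]; apply: anti.
by rewrite h2 // h1.
Qed.

Lemma lm_fSH (F : fieldType) n (le : rel 'X_{1..n}) (A H : {set 'I_n}) :
  term_order le -> H \subset A -> is_lm le (fSH F A H) (mon A).
Proof.
move=> to HA; rewrite fSH_ML //; split.
  by rewrite mcoeff_msupp mcoeff_ML aS_self // oner_neq0.
move=> m /msupp_ML [J -> /aS_sub JA]; apply: to_le => //.
by rewrite mon_le.
Qed.

Lemma U2_neq n (i : 'I_n) : (U_(i) *+ 2 == U_(i))%MM = false.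
Proof.
by apply/negP => /eqP /mnmP /(_ i); rewrite mulmnE mnm1E eqxx.
Qed.

Lemma lm_sq (F : fieldType) n (le : rel 'X_{1..n}) (i : 'I_n) :
  term_order le -> is_lm le ('X_i ^+ 2 - 'X_i : {mpoly F[n]}) (U_(i) *+ 2)%MM.
Proof.
move=> to; rewrite mpolyXn; split.
  rewrite mcoeff_msupp mcoeffB !mcoeffX eqxx; case: (U_(i) =P U_(i) *+ 2)%MM => [e|_]; first by have := congr1 (fun m : 'X_{1..n} => m i) e; rewrite /= mulmnE mnm1E eqxx.
  by rewrite subr0 oner_neq0.
move=> m; rewrite mcoeff_msupp mcoeffB !mcoeffX.
case: (eqVneq (U_(i) *+ 2)%MM m) => [<- _|_]; first by case: to => [[r _ _ _] _].
case: (eqVneq U_(i)%MM m) => [<- _|_]; last by rewrite subrr eqxx.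
apply: to_le => //; apply/mnm_lepP => j; rewrite mulmnE; exact: leq_pmulr.
Qed.
Lemma row_free_of (F : fieldType) m k (A : 'M[F]_(m,k)) :
  (forall u : 'rV_m, u *m A = 0 -> u = 0) -> row_free A.
Proof.
move=> H; rewrite -kermx_eq0; apply/eqP/row_matrixP => i.
by rewrite row0; apply: H; rewrite -row_mul mulmx_ker row0.
Qed.

Lemma row_free_0 (F : fieldType) m k (A : 'M[F]_(m,k)) (u : 'rV_m) :
  row_free A -> u *m A = 0 -> u = 0.
Proof. by move=> /row_free_inj H e; apply: H; rewrite e mul0mx. Qed.

Definition RowIndep (F : fieldType) (I : finType) (P Q : {set I}) (K : I -> I -> F) :=
  forall c : I -> F, (forall x, x \in Q -> \sum_(T in P) c T * K T x = 0) ->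
    forall T, T \in P -> c T = 0.

Definition Mx (F : fieldType) (I : finType) (P Q : {set I}) (K : I -> I -> F) : 'M[F]_(#|P|, #|Q|) :=
  \matrix_(i, j) K (enum_val i) (enum_val j).

Lemma rowindep_free (F : fieldType) (I : finType) (P Q : {set I}) (K : I -> I -> F) :
  RowIndep P Q K <-> row_free (Mx P Q K).
Proof.
split=> [H|fr].
  apply: row_free_of => u e.
  case: (posnP #|P|) => [P0|]; first by apply/matrixP => i j; have := leq_trans (ltn_ord j) (eq_leq P0).
  move/card_gt0P => /sig_eqW [x0 x0P].
  pose c T := u 0 (enum_rank_in x0P T).
  have cE i : c (enum_val i) = u 0 i by rewrite /c enum_valK_in.
  have Hc : forall x, x \in Q -> \sum_(T in P) c T * K T x = 0.
    move=> x xQ; rewrite big_enum_val /=.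
    have := congr1 (fun M : 'M[F]_(1, #|Q|) => M 0 (enum_rank_in xQ x)) e; rewrite !mxE => ex; apply: (etrans _ ex).
    by apply: eq_bigr => i _; rewrite mxE cE enum_rankK_in.
  by apply/matrixP => i j; rewrite ord1 mxE -cE (H c Hc) ?enum_valP.
move=> c Hc T TP.
pose u := \row_(i < #|P|) c (enum_val i).
have e : u *m Mx P Q K = 0.
  apply/rowP => j; rewrite !mxE; apply: etrans (Hc _ (enum_valP j)).
  by rewrite [RHS]big_enum_val; apply: eq_bigr => i _; rewrite !mxE.
have := congr1 (fun M : 'rV_#|P| => M 0 (enum_rank_in TP T)) (row_free_0 fr e).
by rewrite !mxE enum_rankK_in.
Qed.

Lemma rowindep_le (F : fieldType) (I : finType) (P Q : {set I}) (K : I -> I -> F) :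
  RowIndep P Q K -> (#|P| <= #|Q|)%N.
Proof. by move/rowindep_free => /eqP <-; exact: rank_leq_col. Qed.

Lemma Mx_tr (F : fieldType) (I : finType) (P Q : {set I}) (K : I -> I -> F) :
  Mx Q P (fun x T => K T x) = (Mx P Q K)^T.
Proof. by apply/matrixP => i j; rewrite !mxE. Qed.

Lemma sq_indep (F : fieldType) (I : finType) (P Q : {set I}) (K : I -> I -> F) :
  RowIndep Q P (fun x T => K T x) -> #|P| = #|Q| -> RowIndep P Q K.
Proof.
move/rowindep_free; rewrite Mx_tr /row_free mxrank_tr => /eqP r e.
by apply/rowindep_free; rewrite /row_free r e.
Qed.

Definition Kf (F : fieldType) n (T x : {set 'I_n}) : F := (T \subset x)%:R.

Definition spanP (F : fieldType) n (fam : {set {set 'I_n}}) (h : {set 'I_n} -> {set 'I_n})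
  (Qp : {set 'I_n} -> Prop) (phi : {set 'I_n} -> F) :=
  exists e : {set 'I_n} -> F,
    (forall x, x \in Ffam fam h -> phi x = \sum_(T in Hfam fam) e T * Kf F T x) /\
    (forall T, e T != 0 -> Qp T).

Lemma spanP_sum (F : fieldType) n (fam : {set {set 'I_n}}) (h : {set 'I_n} -> {set 'I_n})
  (Qp : {set 'I_n} -> Prop) (r : seq {set 'I_n}) (P : pred {set 'I_n})
  (c : {set 'I_n} -> F) (phi : {set 'I_n} -> {set 'I_n} -> F) :
  (forall J, P J -> c J != 0 -> spanP fam h Qp (phi J)) ->
  spanP fam h Qp (fun x => \sum_(J <- r | P J) c J * phi J x).
Proof.
move=> H; elim: r => [|J r [e [e1 e2]]].
  exists (fun _ => 0); split=> [x _|T]; last by rewrite eqxx.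
  by rewrite big_nil big1 // => T _; rewrite mul0r.
case PJ: (P J); last first.
  by exists e; split=> // x xF; rewrite big_cons PJ e1.
case: (eqVneq (c J) 0) => [cJ|cJ].
  by exists e; split=> // x xF; rewrite big_cons PJ e1 // cJ mul0r add0r.
have [f [f1 f2]] := H J PJ cJ.
exists (fun T => c J * f T + e T); split.
  move=> x xF; rewrite big_cons PJ e1 // f1 // big_distrr -big_split /=.
  by apply: eq_bigr => T _; rewrite mulrDl mulrA.
move=> T; case: (eqVneq (e T) 0) => [->|]; last by move/e2.
rewrite addr0; case: (eqVneq (f T) 0) => [->|/f2 //]; by rewrite mulr0 eqxx.
Qed.

Lemma spanP_mono (F : fieldType) n (fam : {set {set 'I_n}}) (h : {set 'I_n} -> {set 'I_n})
  (Qp Qp' : {set 'I_n} -> Prop) (phi : {set 'I_n} -> F) :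
  (forall T, Qp T -> Qp' T) -> spanP fam h Qp phi -> spanP fam h Qp' phi.
Proof. by move=> H [e [e1 e2]]; exists e; split=> // T /e2 /H. Qed.

Lemma spanP_ext (F : fieldType) n (fam : {set {set 'I_n}}) (h : {set 'I_n} -> {set 'I_n})
  (Qp : {set 'I_n} -> Prop) (phi psi : {set 'I_n} -> F) :
  (forall x, x \in Ffam fam h -> phi x = psi x) -> spanP fam h Qp psi -> spanP fam h Qp phi.
Proof. by move=> H [e [e1 e2]]; exists e; split=> // x xF; rewrite H // e1. Qed.

Lemma spanP_base (F : fieldType) n (fam : {set {set 'I_n}}) (h : {set 'I_n} -> {set 'I_n}) T :
  T \in Hfam fam -> spanP fam h (fun T' => T' = T) (Kf F T).
Proof.
move=> TH; exists (fun T' => (T' == T)%:R); split.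
  move=> x _; rewrite (bigD1 T) //= eqxx mul1r big1 ?addr0 // => T' /andP [_ /negbTE ->].
  by rewrite mul0r.
by move=> T'; case: (eqVneq T' T) => [-> //|ne]; rewrite eqxx.
Qed.

Lemma Hfam_not (n : nat) (fam : {set {set 'I_n}}) T :
  T \notin Hfam fam -> exists2 A, A \in fam & A \subset T.
Proof.
rewrite inE => /forall_inPn [A Af]; rewrite negbK => AT; by exists A.
Qed.

Lemma claimL (F : fieldType) n (fam : {set {set 'I_n}}) (h : {set 'I_n} -> {set 'I_n}) :
  (forall A, A \in fam -> h A \subset A) ->
  forall T, T \notin Hfam fam -> spanP fam h (fun T' => (#|T'| < #|T|)%N) (Kf F T).
Proof.
move=> hsub T; move: {2}#|T|.+1 (ltnSn #|T|) => k; elim: k T => // k IH T Tk TH.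
have [A Af AT] := Hfam_not TH.
have HA := hsub _ Af.
pose T' J := (T :\: A) :|: J.
have key : forall x, x \in Ffam fam h ->
  Kf F T x = \sum_(J : {set 'I_n} | J \proper A) (- aS F A (h A) J) * Kf F (T' J) x.
  move=> x xF.
  have := Gbasis_vanish hsub xF (fSH_in_G F h Af).
  rewrite fSH_ML // ev_ML => /(congr1 (fun y => y * Kf F (T :\: A) x)).
  rewrite mul0r big_distrl /= (bigD1 A) //= aS_self // mul1r.
  have -> : ((A \subset x)%:R * Kf F (T :\: A) x = Kf F T x :> F).
    rewrite /Kf -natrM mulnb -subUset; have -> // : A :|: T :\: A = T.
    apply/setP => i; rewrite !inE; move/subsetP: AT => /(_ i).
    by case: (i \in A); case: (i \in T) => //= /(_ isT).
  move/eqP; rewrite addr_eq0 => /eqP ->; rewrite -sumrN.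
  rewrite (bigID (fun J : {set 'I_n} => J \subset A)) /= [X in _ + X]big1 ?addr0; last first.
    move=> J /andP [_ nJA]; case: (eqVneq (aS F A (h A) J) 0) => [->|/aS_sub JA]; first by rewrite !mul0r oppr0.
    by rewrite JA in nJA.
  apply: eq_big => [J|J _]; first by rewrite properEneq.
  rewrite /Kf /T' subUset -mulnb natrM mulNr -mulrA; congr (- (_ * _)); exact: mulrC.
apply: (spanP_ext key); apply: spanP_sum => J JA _.
have cardT' : (#|T' J| < #|T|)%N.
  have e1 : #|T| = (#|T :\: A| + #|A|)%N.
    by rewrite -(cardsID A T) addnC (setIidPr AT).
  rewrite e1 /T' cardsU; apply: leq_ltn_trans (leq_subr _ _) _.
  by rewrite ltn_add2l proper_card.
case: (boolP (T' J \in Hfam fam)) => TJ.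
  by apply: spanP_mono (spanP_base F h TJ) => T0 ->.
apply: spanP_mono (IH _ _ TJ); last by apply: leq_trans cardT' _; rewrite -ltnS.
by move=> T0 /ltn_trans; apply.
Qed.

Lemma colindep (F : fieldType) n (fam : {set {set 'I_n}}) (h : {set 'I_n} -> {set 'I_n}) :
  (forall A, A \in fam -> h A \subset A) ->
  RowIndep (Ffam fam h) (Hfam fam) (fun x T => Kf F T x).
Proof.
move=> hsub a Ha.
have Hall : forall T, \sum_(x in Ffam fam h) a x * Kf F T x = 0.
  move=> T; case: (boolP (T \in Hfam fam)) => TH; first exact: Ha.
  have [e [e1 _]] := claimL F hsub TH.
  rewrite (eq_bigr (fun x => a x * \sum_(T' in Hfam fam) e T' * Kf F T' x)); last first.
    by move=> x xF; rewrite e1.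
  under eq_bigr do rewrite big_distrr.
  rewrite exchange_big big1 // => T' T'H.
  transitivity (e T' * \sum_(x in Ffam fam h) a x * Kf F T' x); last by rewrite Ha ?mulr0.
  rewrite big_distrr; apply: eq_bigr => x _; exact: mulrCA.
suff H : forall k x, x \in Ffam fam h -> (#|'I_n| - #|x| < k)%N -> a x = 0.
  by move=> x xF; apply: (H (#|'I_n| - #|x|).+1).
elim => // k IH x xF xk.
have := Hall x; rewrite (bigD1 x) //= /Kf subxx mulr1 big1 ?addr0 //.
move=> y /andP [yF ne]; case: (boolP (x \subset y)) => xy; last by rewrite mulr0.
rewrite (IH y) ?mul0r //.
have lt : (#|x| < #|y|)%N by apply: proper_card; rewrite properEneq eq_sym ne.
have : (#|y| <= #|'I_n|)%N := max_card _.
lia.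
Qed.

Lemma card_sum n (A : {set 'I_n}) : #|A| = (\sum_i (i \in A : nat))%N.
Proof.
by rewrite -sum1_card big_mkcond /=; apply: eq_bigr => i _; case: (i \in A).
Qed.

Lemma card_supp n (u : 'X_{1..n}) : (#|supp u| <= mdeg u)%N.
Proof.
rewrite card_sum mdegE; apply: leq_sum => i _; rewrite inE.
by case: (u i).
Qed.

Lemma mdeg_mon n (T : {set 'I_n}) : mdeg (mon T) = #|T|.
Proof. by rewrite mdegE card_sum; apply: eq_bigr => i _; rewrite monE. Qed.

Theorem theorem22 (F : fieldType) (n : nat) (fam : {set {set 'I_n}})
    (h : {set 'I_n} -> {set 'I_n}) :
  sperner fam ->
  (forall A, A \in fam -> h A \subset A) ->
  ((exists le : rel 'X_{1..n},
       term_order le /\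
       groebner le (Gbasis F fam h) (in_ideal (Gbasis F fam h)))
   <-> #|Hfam fam| = #|Ffam fam h|).
Proof.
move=> _ hsub; have CI := colindep (F:=F) hsub.
have le1 : (#|Ffam fam h| <= #|Hfam fam|)%N := rowindep_le CI.
split.
  move=> [le [to [_ gb]]].
  apply/eqP; rewrite eqn_leq le1 andbT.
  apply: (@rowindep_le F _ _ _ (fun T x => Kf F T x)).
  move=> c Hc T TH; case: (eqVneq (c T) 0) => // cT.
  pose c' T := if T \in Hfam fam then c T else 0.
  pose p := ML c'.
  have pI : in_ideal (Gbasis F fam h) p.
    have -> : p = \sum_T c' T *: xH F T by rewrite /p /ML; apply: eq_bigr => T' _; rewrite xH_mon.
    apply: vanish_in_ideal => // x xF; apply: etrans (Hc x xF); rewrite [RHS]big_mkcond.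
    by apply: eq_bigr => T' _; rewrite /c'; case: (T' \in Hfam fam) => //; rewrite mul0r.
  have p0 : p != 0.
    apply: contra_neq cT => p0; have := mcoeff_ML c' T; rewrite -/p p0 mcoeff0 /c' TH.
    by move=> <-.
  have [g gG [mg [mf [lmg lmf dv]]]] := gb p pI p0.
  have [T' mfE cT'] := msupp_ML lmf.1.
  have T'H : T' \in Hfam fam by move: cT'; rewrite /c'; case: (T' \in Hfam fam); rewrite ?eqxx.
  move: gG; rewrite mem_cat => /orP [] /mapP [A]; last first.
    move=> _ gE; rewrite gE in lmg; have := is_lm_unique to lmg (lm_sq F A to) => mgE.
    move/mnm_lepP: dv => /(_ A); rewrite mgE mfE mulmnE mnm1E eqxx monE.
    by case: (A \in T').
  rewrite mem_enum => Af gE; rewrite gE in lmg.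
  have := is_lm_unique to lmg (lm_fSH F to (hsub _ Af)) => mgE.
  move: dv; rewrite mgE mfE mon_le => AT'.
  by move: T'H; rewrite inE => /forall_inP /(_ _ Af); rewrite AT'.
move=> eqc; have RI := sq_indep CI eqc.
pose le := fun m1 m2 : 'X_{1..n} => (m1 <= m2)%O.
have to : term_order le.
  split; first by split; [exact: lexx | exact: le_anti | exact: le_trans | exact: le_total].
  by split; [exact: le0m | move=> m1 m2 p; rewrite /le lemc_add2l].
exists le; split=> //; split; first by move=> g gG; apply: idealG.
move=> f fI f0; set mf := mlead f.
have lmf : is_lm le f mf by split; [exact: mlead_supp | move=> m; exact: msupp_le_mlead].
case: (boolP [exists i, (1 < mf i)%N]) => [/existsP [i mfi]|/existsPn nA].
  exists ('X_i ^+ 2 - 'X_i); first exact: sq_in_G.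
  exists (U_(i) *+ 2)%MM, mf; split=> //; first exact: lm_sq.
  apply/mnm_lepP => j; rewrite mulmnE mnm1E; case: eqP => [<-|] //=.
case: (boolP [exists A in fam, A \subset supp mf]) => [/exists_inP [A Af AS]|/exists_inPn nB].
  exists (fSH F A (h A)); first exact: fSH_in_G.
  exists (mon A), mf; split=> //; first by apply: lm_fSH => //; apply: hsub.
  apply/mnm_lepP => j; rewrite monE; case jA: (j \in A) => //.
  by move/subsetP: AS => /(_ _ jA); rewrite inE.
exfalso.
pose F0 := supp mf.
have mfE : mf = mon F0.
  apply/mnmP => i; rewrite monE inE; move: (nA i); rewrite -leqNgt.
  by case: (mf i) => [|[|]].
have F0H : F0 \in Hfam fam by rewrite inE; apply/forall_inP => A Af; exact: nB.
pose d T := \sum_(u <- msupp f | supp u == T) f@_u.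
have evf : forall x, x \in Ffam fam h -> \sum_T d T * Kf F T x = 0.
  move=> x xF; have := ideal_vanish fI (Gbasis_vanish hsub xF).
  rewrite mevalE => ex; apply: etrans ex.
  under [RHS]eq_bigr do rewrite prod_ev.
  rewrite /d /=; under eq_bigr do rewrite big_distrl.
  under eq_bigr do rewrite big_mkcond.
  rewrite exchange_big; apply: eq_bigr => u _ /=; rewrite -big_mkcond /=.
  by rewrite (big_pred1 (supp u)) // => T; rewrite /= eq_sym.
have supp_eq : forall u, u \in msupp f -> supp u = F0 -> u = mf.
  move=> u us su; apply: le_anti; rewrite msupp_le_mlead //=.
  apply: (to_le to); rewrite mfE; apply/mnm_lepP => i; rewrite monE -su inE.
  by case: (u i).
have dF : d F0 = f@_mf.
  rewrite /d big_mkcond (bigD1_seq mf) ?msupp_uniq ?mlead_supp //= eqxx big1_seq ?addr0 //.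
  move=> u /andP [ne us]; case: eqP => // su.
  by rewrite (supp_eq _ us su) eqxx in ne.
have dF0 : d F0 != 0 by rewrite dF -mcoeff_msupp; exact: mlead_supp.
have dsz : forall T, d T != 0 -> (#|T| <= #|F0|)%N.
  move=> T; case: (boolP (has (fun u => supp u == T) (msupp f))) => [/hasP [u us /eqP <-] _|/hasPn H].
    apply: leq_trans (card_supp u) _; rewrite -(mdeg_mon F0) -mfE.
    by apply: lemc_mdeg; exact: msupp_le_mlead.
  by rewrite /d big1_seq ?eqxx // => u /andP [e us]; move: (H u us); rewrite e.
have sp : spanP fam h (fun T' => T' != F0)
    (fun x => \sum_(T <- index_enum _ | T != F0) d T * Kf F T x).
  apply: spanP_sum => T TF dT.
  case: (boolP (T \in Hfam fam)) => TH.
    by apply: spanP_mono (spanP_base F h TH) => T' ->.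
  apply: spanP_mono (claimL F hsub TH) => T' lt; apply/eqP => e; rewrite e in lt.
  by have := dsz _ dT; rewrite leqNgt lt.
have [e [e1 e2]] := sp.
pose c T := e T + (T == F0)%:R * d F0.
have Hc : forall x, x \in Ffam fam h -> \sum_(T in Hfam fam) c T * Kf F T x = 0.
  move=> x xF; apply: etrans (evf x xF).
  have e1x := e1 x xF; simpl in e1x.
  rewrite [RHS](bigD1 F0) //= e1x.
  under eq_bigr do rewrite mulrDl.
  rewrite big_split /= addrC; congr (_ + _).
  rewrite (bigD1 F0) //= eqxx mul1r big1 ?addr0 // => T /andP [_ /negbTE ->].
  by rewrite !mul0r.
have := RI c Hc F0 F0H; rewrite /c.
case: (eqVneq (e F0) 0) => [->|/e2]; last by rewrite eqxx.
by rewrite add0r eqxx mul1r => /eqP; rewrite (negbTE dF0).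
Qed.
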